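(* Let $G$ be a gradual mechanism for a social choice function $f$, and for an agent $i$ let $\boldsymbol{Z}_i$ be a partition of the terminal histories $Z$ such that the extended family of information sets $\overline{\boldsymbol{H}}_i=\boldsymbol{H}_i\cup\boldsymbol{Z}_i$ still satisfies perfect recall. For each $\boldsymbol{h}_i\in\overline{\boldsymbol{H}}_i$ let $\Theta(\boldsymbol{h}_i)=\bigcup_{h\in\boldsymbol{h}_i}\Theta(h)$ and $\Theta_{-i}(\boldsymbol{h}_i)=\bigcup_{h\in\boldsymbol{h}_i}\Theta_{-i}(h)$. Then the information flow $\mathbb{F}_i=\{\Theta(\boldsymbol{h}_i):\boldsymbol{h}_i\in\overline{\boldsymbol{H}}_i\}$ of agent $i$ satisfies: 1. For any $\underline{\boldsymbol{h}}_i\in\boldsymbol{H}_i$, $\{\Theta(\boldsymbol{h}_i)\}_{\boldsymbol{h}_i\in\sigma(\underline{\boldsymbol{h}}_i)}$ is a partition of $\Theta(\underline{\boldsymbol{h}}_i)$. 2. For any $\underline{\boldsymbol{h}}_i\in\boldsymbol{H}_i$ and any $a_i\in A_i(\underline{\boldsymbol{h}}_i)$, $\{\Theta_{-i}(\boldsymbol{h}_i)\}_{\boldsymbol{h}_i\in\sigma_{a_i}(\underline{\boldsymbol{h}}_i)}$ is a partition of $\Theta_{-i}(\underline{\boldsymbol{h}}_i)$.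
   Context: A finite set $N$ of agents; each agent $i$ has a type space $\Theta_i$, $\Theta=\prod_{i\in N}\Theta_i$; $f:\Theta\to X$ is a social choice function. A dynamic game form with perfect recall $G=(\overline{H},\{A_i,\boldsymbol{H}_i\}_{i\in N},\mathcal{X})$: each agent $i$ has a nonempty action set $A_i$; an action profile is an element of $\prod_{i\in M}A_i$ for some nonempty $M\subseteq N$. Histories are finite sequences of action profiles; $\overline{H}$ is a finite-length tree of such sequences containing $\varnothing$ and closed under immediate predecessors; $\preceq$ is the prefix order. $Z$ = $\preceq$-maximal (terminal) histories, $H=\overline{H}\setminus Z$. An active-player correspondence $\mathbb{P}:H\twoheadrightarrow N$ is such that the immediate successors of $h\in H$ are exactly $(h,a)$, $a\in\prod_{i\in\mathbb{P}(h)}A_i(h)$, with $A_i(h)$ the actions available to $i$ at $h$. $H_i=\{h\in H:i\in\mathbb{P}(h)\}$, and $\boldsymbol{H}_i$ is a partition of $H_i$ into information sets on which $A_i(\cdot)$ is constant (written $A_i(\boldsymbol{h}_i)$). Perfect recall: for $h,\tilde h$ in the same information set, $h_i=\tilde h_i$, and for every $\underline h\preceq h$ in an information set of $i$ there is $\underline{\tilde h}\preceq\tilde h$ in the same information set as $\underline h$. Here $h_i$ denotes the sequence of actions of $i$ in $h$. $\mathcal{X}:Z\to X$. A gradual mechanism for $f$ is such a game form with: (1) $A_i=2^{\Theta_i}\setminus\{\varnothing\}$; (2) for $h\in H_i$, the sets in $A_i(h)$ are pairwise disjoint with union $\bigcap h_i$ (the intersection of $i$'s actions in $h$; $\Theta_i$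 if none); (3) for $z\in Z$ and $\theta\in\prod_i\Theta_i(z)$, $\mathcal{X}(z)=f(\theta)$. For $h\in\overline{H}$, $\Theta_j(h)$ is the last action of agent $j$ in $h$ if $j$ has acted, and $\Theta_j$ otherwise; $\Theta(h)=\prod_{j\in N}\Theta_j(h)$ and $\Theta_{-i}(h)=\prod_{j\neq i}\Theta_j(h)$. On $\overline{\boldsymbol{H}}_i$ the precedence $\underline{\boldsymbol{h}}_i\preceq\boldsymbol{h}_i$ holds if there are $\underline h\in\underline{\boldsymbol{h}}_i$, $h\in\boldsymbol{h}_i$ with $\underline h\preceq h$; this makes $\overline{\boldsymbol{H}}_i$ an arborescence. $\sigma(\underline{\boldsymbol{h}}_i)$ denotes the set of immediate successors of $\underline{\boldsymbol{h}}_i$ in $\overline{\boldsymbol{H}}_i$, and for $a_i\in A_i(\underline{\boldsymbol{h}}_i)$, $\sigma_{a_i}(\underline{\boldsymbol{h}}_i)$ is the subset of those immediate successors reached after $i$ takes action $a_i$ at $\underline{\boldsymbol{h}}_i$ (equivalently those $\boldsymbol{h}_i$ with $\Theta_i(\boldsymbol{h}_i)=a_i$, where $\Theta_i(\boldsymbol{h}_i)$ is the common value of $\Theta_i(h)$, $h\in\boldsymbol{h}_i$). *)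

(* Defs.v *)
From Stdlib Require List.
From mathcomp Require Import all_boot.
Unset Implicit Arguments.
Unset Strict Implicit.
Unset Printing Implicit Defensive.

Section GameForms.

Variable N : finType.
Variable Theta : N -> Type.

Definition action (i : N) := Theta i -> Prop.

(* An action profile: a partial assignment of actions, defined exactly on the
   (nonempty) set M of agents who move. *)
Definition profile := forall i : N, option (action i).
Definition profile_nonempty (p : profile) : Prop := exists i, p i <> None.

(* Histories: finite sequences of action profiles, in chronological order. *)
Definition history := seq profile.

Definition prefix (h1 h2 : history) : Prop := exists s, h2 = h1 ++ s.

Definition acts (i : N) (h : history) : seq (action i) := pmap (fun p => p i) h.

Definition ThetaAt (j : N) (h : history) : action j :=
  last (fun _ => True) (acts j h).

Definition capActs (i : N) (h : history) : action i :=
  fun t => forall a, List.In a (acts i h) -> a t.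

Definition tprofile := forall j : N, Theta j.
Definition tprofile_minus (i : N) := forall j : N, j <> i -> Theta j.

Definition ThetaH (h : history) : tprofile -> Prop :=
  fun th => forall j, ThetaAt j h (th j).
Definition ThetaH_minus (i : N) (h : history) : tprofile_minus i -> Prop :=
  fun th => forall j (hj : j <> i), ThetaAt j h (th j hj).

Definition hset := history -> Prop.
Definition hfamily := hset -> Prop.

Definition hpartition (F : hfamily) (S : hset) : Prop :=
  (forall B, F B -> exists h, B h) /\
  (forall B, F B -> forall h, B h -> S h) /\
  (forall h, S h -> exists B, F B /\ B h) /\
  (forall B1 B2, F B1 -> F B2 -> (exists h, B1 h /\ B2 h) -> B1 = B2).

Definition family_partition {T : Type} (I : hfamily) (E : hset -> T -> Prop)
    (S : T -> Prop) : Prop :=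
  (forall B, I B -> exists x, E B x) /\
  (forall B1 B2, I B1 -> I B2 -> B1 <> B2 -> forall x, E B1 x -> E B2 x -> False) /\
  (forall x, S x <-> exists B, I B /\ E B x).

Definition perfect_recall (i : N) (F : hfamily) : Prop :=
  forall B, F B -> forall h h', B h -> B h' ->
    acts i h = acts i h' /\
    (forall Bb hb, F Bb -> Bb hb -> prefix hb h ->
       exists hb', Bb hb' /\ prefix hb' h').

Record game_form (X : Type) := GameForm {
  gHbar : hset;
  gP    : history -> N -> Prop;
  gA    : history -> forall i : N, action i -> Prop;
  gInfo : N -> hfamily;
  gOut  : history -> X
}.

Arguments gHbar {X}.
Arguments gP {X}.
Arguments gA {X}.
Arguments gInfo {X}.
Arguments gOut {X}.

Variable X : Type.
Variable G : game_form X.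

Definition terminal (h : history) : Prop :=
  gHbar G h /\ forall h', gHbar G h' -> prefix h h' -> h' = h.
Definition nonterminal (h : history) : Prop := gHbar G h /\ ~ terminal h.
Definition Hi (i : N) (h : history) : Prop := nonterminal h /\ gP G h i.

Definition available_profile (h : history) (p : profile) : Prop :=
  forall i, (gP G h i -> exists a, p i = Some a /\ gA G h i a) /\
            (~ gP G h i -> p i = None).

Definition is_game_form : Prop :=
  gHbar G [::] /\
  (forall h p, gHbar G (rcons h p) -> gHbar G h) /\
  (forall h, gHbar G h -> forall p, List.In p h -> profile_nonempty p) /\
  (exists L, forall h, gHbar G h -> size h <= L) /\
  (forall h, nonterminal h -> forall p, gHbar G (rcons h p) <-> available_profile h p) /\
  (forall i, hpartition (gInfo G i) (Hi i)) /\
  (forall i B, gInfo G i B -> forall h h', B h -> B h' ->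
       forall a, gA G h i a <-> gA G h' i a) /\
  (forall i, perfect_recall i (gInfo G i)).

Definition is_gradual_mechanism (f : tprofile -> X) : Prop :=
  is_game_form /\
  (forall i h, Hi i h -> forall a, gA G h i a -> exists t, a t) /\
  (forall i h, Hi i h ->
     (forall a a', gA G h i a -> gA G h i a' -> a <> a' ->
        forall t, a t -> a' t -> False) /\
     (forall t, capActs i h t <-> exists a, gA G h i a /\ a t)) /\
  (forall z, terminal z -> forall th, ThetaH z th -> gOut G z = f th).

Definition ext_family (i : N) (Zi : hfamily) : hfamily :=
  fun B => gInfo G i B \/ Zi B.

Definition ThetaB (B : hset) : tprofile -> Prop :=
  fun th => exists h, B h /\ ThetaH h th.
Definition ThetaB_minus (i : N) (B : hset) : tprofile_minus i -> Prop :=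
  fun th => exists h, B h /\ ThetaH_minus i h th.

Definition precB (B1 B2 : hset) : Prop :=
  exists h1 h2, B1 h1 /\ B2 h2 /\ prefix h1 h2.

Definition isucc (F : hfamily) (Bu : hset) : hfamily :=
  fun B => F B /\ precB Bu B /\ B <> Bu /\
    ~ (exists C, F C /\ C <> Bu /\ C <> B /\ precB Bu C /\ precB C B).

Definition isucc_act (i : N) (F : hfamily) (Bu : hset) (a : action i) : hfamily :=
  fun B => isucc F Bu B /\
    exists hu h p, Bu hu /\ B h /\ p i = Some a /\ prefix (rcons hu p) h.

End GameForms.

Arguments profile_nonempty {N Theta}.
Arguments prefix {N Theta}.
Arguments acts {N Theta}.
Arguments ThetaAt {N Theta}.
Arguments capActs {N Theta}.
Arguments ThetaH {N Theta}.
Arguments ThetaH_minus {N Theta}.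
Arguments hpartition {N Theta}.
Arguments family_partition {N Theta T}.
Arguments perfect_recall {N Theta}.
Arguments GameForm {N Theta X}.
Arguments gHbar {N Theta X}.
Arguments gP {N Theta X}.
Arguments gA {N Theta X}.
Arguments gInfo {N Theta X}.
Arguments gOut {N Theta X}.
Arguments terminal {N Theta X}.
Arguments nonterminal {N Theta X}.
Arguments Hi {N Theta X}.
Arguments available_profile {N Theta X}.
Arguments is_game_form {N Theta X}.
Arguments is_gradual_mechanism {N Theta X}.
Arguments ext_family {N Theta X}.
Arguments ThetaB {N Theta}.
Arguments ThetaB_minus {N Theta}.
Arguments precB {N Theta}.
Arguments isucc {N Theta}.
Arguments isucc_act {N Theta}.
Arguments action {N} Theta i.
Arguments profile {N} Theta.
Arguments history {N} Theta.
Arguments hset {N} Theta.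
Arguments hfamily {N} Theta.
Arguments tprofile {N} Theta.
Arguments tprofile_minus {N} Theta i.
Arguments game_form {N} Theta X.

(* Main.v *)
From Stdlib Require Import Classical FunctionalExtensionality IndefiniteDescription ProofIrrelevance.
Require Import Defs.
From mathcomp Require Import all_boot zify.

Section Pre.
Context {T : Type}.
Implicit Types x y z h : seq T.

Lemma pre_refl x : exists s, x = x ++ s.
Proof. exists [::]; by rewrite cats0. Qed.

Lemma pre_trans {x y z} : (exists s, y = x ++ s) -> (exists s, z = y ++ s) -> exists s, z = x ++ s.
Proof. move=> [s ->] [t ->]; exists (s ++ t); by rewrite catA. Qed.

Lemma pre_size {x y} : (exists s, y = x ++ s) -> size x <= size y.
Proof. move=> [s ->]; rewrite size_cat; lia. Qed.

Lemma pre_eq {x y} : (exists s, y = x ++ s) -> size y <= size x -> x = y.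
Proof. move=> [s ->]; rewrite size_cat => H.
have: size s = 0 by lia. by case: s H => // _ _; rewrite cats0. Qed.

Lemma cat_injl {x y z} : x ++ y = x ++ z -> y = z.
Proof. elim: x => //= a x IH [] /IH //. Qed.

Lemma pre_total {x y z} : (exists s, z = x ++ s) -> (exists s, z = y ++ s) ->
  (exists s, y = x ++ s) \/ (exists s, x = y ++ s).
Proof.
move=> [s ->]; elim: x y => [|a x IH] y [t E]; first by left; exists y.
case: y E => [|b y] E; first by right; exists (a :: x).
case: E => -> E. have [[u ->]|[u ->]] := IH y (ex_intro _ t E).
by left; exists u. by right; exists u.
Qed.

Lemma pre_split {h c h' q} : (exists s, c = h ++ s) -> (exists s, h' = c ++ s) ->
  (exists s, h' = rcons h q ++ s) -> c = h \/ exists s, c = rcons h q ++ s.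
Proof.
move=> [s ->] [t ->] [u] E.
have: h ++ (s ++ t) = h ++ (q :: u) by rewrite catA E cat_rcons.
move=> /cat_injl; clear E.
case: s => [|b s]; first by left; rewrite cats0.
move=> /= [<- _]; right; exists s; by rewrite cat_rcons.
Qed.

Lemma pre_rcons_r {c h p} : (exists s, rcons h p = c ++ s) -> c = rcons h p \/ exists s, h = c ++ s.
Proof.
move=> [t]; case/lastP: t => [|t x]; first by rewrite cats0 => ->; left.
rewrite -rcons_cat => /rcons_inj [-> _]; right; by exists t.
Qed.

Lemma pre_next {h h'} : (exists s, h' = h ++ s) -> h <> h' -> exists q s, h' = rcons h q ++ s.
Proof. move=> [[|q s] ->]; first by rewrite cats0. by move=> _; exists q, s; rewrite cat_rcons. Qed.

End Pre.

Section Game.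
Variables (N : finType) (Theta : N -> Type) (X : Type) (G : game_form Theta X).
Hypothesis Hpre : forall h p, gHbar G (rcons h p) -> gHbar G h.
Hypothesis Hsucc : forall h, nonterminal G h -> forall p, gHbar G (rcons h p) <-> available_profile G h p.
Hypothesis Hne : forall i h, Hi G i h -> forall a, gA G h i a -> exists t, a t.
Hypothesis Hdisj : forall i h, Hi G i h -> forall a a', gA G h i a -> gA G h i a' -> a <> a' -> forall t, a t -> a' t -> False.
Hypothesis Hcap : forall i h, Hi G i h -> forall t, capActs i h t <-> exists a, gA G h i a /\ a t.

Notation hist := (seq (profile Theta)).

Lemma acts_cat j (x y : hist) : acts j (x ++ y) = acts j x ++ acts j y.
Proof. exact: pmap_cat. Qed.

Lemma acts_rcons j (h : hist) p : acts j (rcons h p) =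
  match p j with Some a => rcons (acts j h) a | None => acts j h end.
Proof. rewrite -cats1 acts_cat /acts /=; case: (p j) => [a|]; by rewrite ?cats1 ?cats0. Qed.

Lemma tree_prefix {h h' : hist} : gHbar G h' -> Defs.prefix h h' -> gHbar G h.
Proof.
move=> Hh' [s E]; subst h'; move: Hh'.
elim/last_ind: s => [|s q IH]; first by rewrite cats0.
rewrite -rcons_cat => /Hpre; exact: IH.
Qed.

Lemma tree_step {h : hist} {p} : gHbar G (rcons h p) -> nonterminal G h /\ available_profile G h p.
Proof.
move=> H.
have Hh := Hpre _ _ H.
have NT : nonterminal G h.
  split=> // -[_ Ht]. have := Ht _ H (ex_intro _ [:: p] (esym (cats1 _ _))).
  move=> /(f_equal size); rewrite size_rcons; lia.
split=> //; exact/(Hsucc _ NT).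
Qed.

Lemma avail_some {h : hist} {p j a} : available_profile G h p -> p j = Some a -> gP G h j /\ gA G h j a.
Proof.
move=> Hav E; have [H1 H2] := Hav j.
case: (classic (gP G h j)) => Hg; last by rewrite H2 in E.
have [a' [E' Ha']] := H1 Hg; rewrite E in E'; case: E' => ->; done.
Qed.

Lemma acts_ne {h : hist} {j a} : gHbar G h -> List.In a (acts j h) -> exists t, a t.
Proof.
elim/last_ind: h => [|h p IH] //= Hh.
have [NT Hav] := tree_step Hh.
rewrite acts_rcons; case E: (p j) => [b|]; last exact: IH (Hpre _ _ Hh).
rewrite -cats1 List.in_app_iff => -[|[<-|//]]; first exact: IH (Hpre _ _ Hh).
have [Hg Hb] := avail_some Hav E; exact: Hne _ _ (conj NT Hg) _ Hb.
Qed.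

Lemma ThetaAt_cap {h : hist} {j t} : gHbar G h -> ThetaAt j h t <-> capActs j h t.
Proof.
elim/last_ind: h => [|h p IH] Hh; first by rewrite /ThetaAt /capActs /=.
have [NT Hav] := tree_step Hh.
rewrite /ThetaAt /capActs acts_rcons; case E: (p j) => [b|]; last exact: IH (Hpre _ _ Hh).
rewrite last_rcons; split.
- move=> Hb c; rewrite -cats1 List.in_app_iff => -[Hc|[<-|//]] //.
  have [Hg Hgb] := avail_some Hav E.
  have := (proj2 (Hcap _ _ (conj NT Hg) t) (ex_intro _ b (conj Hgb Hb))); exact.
- move=> H; apply: H; rewrite -cats1 List.in_app_iff; right; by left.
Qed.


Definition Cons (th : tprofile Theta) (h : hist) := forall j, capActs j h (th j).

Lemma ThetaH_Cons {h : hist} {th} : gHbar G h -> ThetaH h th <-> Cons th h.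
Proof. move=> Hh; split=> H j; apply/(ThetaAt_cap Hh); exact: H. Qed.

Lemma cap_mono {h h' : hist} {j t} : Defs.prefix h h' -> capActs j h' t -> capActs j h t.
Proof. move=> [s ->] H a Ha; apply: H; rewrite acts_cat List.in_app_iff; by left. Qed.

Lemma ThetaAt_mono {h h' : hist} {j t} : gHbar G h' -> Defs.prefix h h' -> ThetaAt j h' t -> ThetaAt j h t.
Proof.
move=> Hh' Hp /(ThetaAt_cap Hh') H; apply/(ThetaAt_cap (tree_prefix Hh' Hp)); exact: cap_mono Hp H.
Qed.

Lemma Cons_mono {h h' : hist} {th} : Defs.prefix h h' -> Cons th h' -> Cons th h.
Proof. move=> Hp H j; exact: cap_mono Hp (H j). Qed.

Lemma acts_strict {i} {c h' : hist} : Hi G i c -> gHbar G h' -> Defs.prefix c h' -> c <> h' ->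
  size (acts i c) < size (acts i h').
Proof.
move=> [NT Hg] Hh' Hp Hne'; have [q [s E]] := pre_next Hp Hne'.
have Hq : gHbar G (rcons c q) by apply: tree_prefix Hh' _; exists s.
have [_ Hav] := tree_step Hq.
rewrite E acts_cat acts_rcons.
case: (q i) (Hav i) => [b|] [H1 H2]; last by have [? [//]] := H1 Hg.
rewrite size_cat size_rcons; lia.
Qed.


Lemma noi_acts {i} {g h' : hist} : gHbar G h' -> Defs.prefix g h' ->
  (forall c, Defs.prefix g c -> Defs.prefix c h' -> c <> h' -> ~ Hi G i c) ->
  acts i h' = acts i g.
Proof.
move=> Hh' [s E]; subst h'; elim/last_ind: s Hh' => [|s q IH] Hh' Hno; first by rewrite cats0.
move: Hh' Hno; rewrite -rcons_cat => Hh' Hno.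
have [NT Hav] := tree_step Hh'.
have Hc : ~ Hi G i (g ++ s).
  apply: Hno; first by exists s.
  - by exists [:: q]; rewrite cats1.
  - by move=> /(f_equal size); rewrite size_rcons; lia.
rewrite acts_rcons; case E: (q i) => [b|].
  by have [Hg _] := avail_some Hav E; case: Hc.
apply: IH (Hpre _ _ Hh') _ => c H1 H2 H3; apply: Hno => //.
- apply: pre_trans H2 _; by exists [:: q]; rewrite cats1.
- move=> E'; subst c; move: (pre_size H2); rewrite size_rcons; lia.
Qed.

Lemma cons_comparable_gen {th} (h1 : hist) : forall c h2, gHbar G (c ++ h1) -> gHbar G (c ++ h2) ->
  Cons th (c ++ h1) -> Cons th (c ++ h2) ->
  Defs.prefix h1 h2 \/ Defs.prefix h2 h1.
Proof.
elim: h1 => [|p r1 IH] c h2 T1 T2 C1 C2; first by left; exists h2.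
case: h2 T2 C2 => [|q r2] T2 C2; first by right; exists (p :: r1).
have Pp : Defs.prefix (rcons c p) (c ++ p :: r1) by exists r1; rewrite cat_rcons.
have Pq : Defs.prefix (rcons c q) (c ++ q :: r2) by exists r2; rewrite cat_rcons.
have Tp := tree_prefix T1 Pp; have Tq := tree_prefix T2 Pq.
have Cp := Cons_mono Pp C1; have Cq := Cons_mono Pq C2.
have [NT Hap] := tree_step Tp; have [_ Haq] := tree_step Tq.
have Epq : p = q.
  apply: functional_extensionality_dep => j.
  have [P1 P2] := Hap j; have [Q1 Q2] := Haq j.
  case: (classic (gP G c j)) => Hg; last by rewrite P2 // Q2.
  have [a1 [E1 G1]] := P1 Hg; have [a2 [E2 G2]] := Q1 Hg.
  rewrite E1 E2; congr Some; apply: NNPP => Hne12.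
  apply: (Hdisj _ _ (conj NT Hg) _ _ G1 G2 Hne12 (th j)).
  - apply: (Cp j); rewrite acts_rcons E1 -cats1 List.in_app_iff; right; by left.
  - apply: (Cq j); rewrite acts_rcons E2 -cats1 List.in_app_iff; right; by left.
subst q.
move: T1 T2 C1 C2; rewrite -!cat_rcons => T1 T2 C1 C2.
have [[u E]|[u E]] := IH _ _ T1 T2 C1 C2.
- by left; exists u; rewrite E.
- by right; exists u; rewrite E.
Qed.

Lemma cons_comparable {th} {h1 h2 : hist} : gHbar G h1 -> gHbar G h2 ->
  Cons th h1 -> Cons th h2 -> Defs.prefix h1 h2 \/ Defs.prefix h2 h1.
Proof. exact: (@cons_comparable_gen th h1 [::] h2). Qed.


Lemma truth_step {i th} {g : hist} : nonterminal G g -> Cons th g ->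
  exists q, gHbar G (rcons g q) /\ Cons th (rcons g q) /\
    (forall a, gP G g i -> gA G g i a -> a (th i) -> q i = Some a).
Proof.
move=> NT Cg.
have Hex : forall j, exists o : option (action Theta j),
    (gP G g j -> exists a, o = Some a /\ gA G g j a /\ a (th j)) /\ (~ gP G g j -> o = None).
  move=> j; case: (classic (gP G g j)) => Hg.
  - have [a [Ga Ha]] := proj1 (Hcap _ _ (conj NT Hg) (th j)) (Cg j).
    exists (Some a); split=> // _; by exists a.
  - by exists None; split.
pose q : profile Theta := fun j => proj1_sig (constructive_indefinite_description _ (Hex j)).
have Hq : forall j, (gP G g j -> exists a, q j = Some a /\ gA G g j a /\ a (th j)) /\ (~ gP G g j -> q j = None).
  move=> j; exact: (proj2_sig (constructive_indefinite_description _ (Hex j))).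
have Hav : available_profile G g q.
  move=> j; have [H1 H2] := Hq j; split=> // Hg.
  have [a [? [? _]]] := H1 Hg; by exists a.
exists q; split; first exact/(Hsucc _ NT).
split.
- move=> j c; rewrite acts_rcons; case E: (q j) => [b|]; last first. move=> Hc; exact: (Cg j c Hc).
  rewrite -cats1 List.in_app_iff => -[Hc|[<-|//]]; first exact: Cg j c Hc.
  have [H1 H2] := Hq j; case: (classic (gP G g j)) => Hg; last by rewrite H2 in E.
  have [a [Ea [_ Ha]]] := H1 Hg; rewrite E in Ea; by case: Ea => ->.
- move=> a Hg Ga Ha; have [a' [Ea' [Ga' Ha']]] := (proj1 (Hq i)) Hg.
  rewrite Ea'; congr Some; apply: NNPP => Hne'.
  exact: (Hdisj _ _ (conj NT Hg) _ _ Ga' Ga Hne' (th i)).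
Qed.

Variable L : nat.
Hypothesis Hfin : forall h, gHbar G h -> size h <= L.

Lemma walk {i th} n : forall g : hist, L - size g <= n -> gHbar G g -> Cons th g ->
  exists h', Defs.prefix g h' /\ gHbar G h' /\ Cons th h' /\ (Hi G i h' \/ terminal G h') /\
    (forall c, Defs.prefix g c -> Defs.prefix c h' -> c <> h' -> ~ Hi G i c).
Proof.
elim: n => [|n IH] g Hn Tg Cg.
all: case: (classic (Hi G i g \/ terminal G g)) => Hst.
1,3: exists g; split; [exact: pre_refl|]; do 3 split=> //;
  move=> c H1 H2 H3; case: H3; apply: esym; apply: pre_eq H1 (pre_size H2).
all: have NT : nonterminal G g by split=> // Ht; apply: Hst; right.
all: have [q [Tq [Cq _]]] := truth_step (i := i) NT Cg.
all: have := Hfin _ Tq; rewrite size_rcons => Hs.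
  lia.
have [h' [P1 [T1 [C1 [S1 N1]]]]] := IH (rcons g q) ltac:(rewrite size_rcons; lia) Tq Cq.
exists h'; split.
  apply: pre_trans P1; by exists [:: q]; rewrite cats1.
do 3 split=> //.
move=> c H1 H2 H3.
have [->|Hc] := pre_split H1 H2 P1; first by move=> Hi'; apply: Hst; left.
exact: N1 Hc H2 H3.
Qed.



Lemma ext_profile k (th' : tprofile_minus Theta k) (t : Theta k) :
  exists th : tprofile Theta, th k = t /\ forall j (hj : j <> k), th j = th' j hj.
Proof.
exists (fun j => match (j =P k) with ReflectT e => eq_rect_r Theta t e | ReflectF ne => th' j ne end).
split.
- case: (k =P k) => [e|ne] //; by rewrite (eq_irrelevance e (erefl k)).
- move=> j hj; case: (j =P k) => [e|ne] //; by rewrite (proof_irrelevance _ ne hj).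
Qed.

Lemma glue k {h : hist} {th' : tprofile_minus Theta k} {t th} :
  ThetaH_minus k h th' -> ThetaAt k h t -> th k = t -> (forall j hj, th j = th' j hj) -> ThetaH h th.
Proof.
move=> Hm Ht Ek Ej j; case: (classic (j = k)) => [E|NE].
- subst j; by rewrite Ek.
- rewrite (Ej j NE); exact: Hm.
Qed.

Lemma last_in {A : Type} (x : A) s : s <> [::] -> List.In (last x s) s.
Proof.
elim: s x => [|y s IH] x //= _.
case: s IH => [|z s] IH /=; first by left.
right; exact: IH.
Qed.

Hypothesis Hinh : forall j, inhabited (Theta j).

Lemma exists_ThetaH {h : hist} : gHbar G h -> exists th, ThetaH h th.
Proof.
move=> Hh.
have Hex : forall j, exists t, ThetaAt j h t.
  move=> j; rewrite /ThetaAt.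
  case E: (acts j h) => [|b s].
  - have [t] := Hinh j; by exists t.
  - apply: (acts_ne Hh); rewrite E; exact: last_in.
exists (fun j => proj1_sig (constructive_indefinite_description _ (Hex j))).
move=> j; exact: (proj2_sig (constructive_indefinite_description _ (Hex j))).
Qed.

Variables (i : N) (Zi : hfamily Theta).
Hypothesis HinfoP : hpartition (gInfo G i) (Hi G i).
Hypothesis HZ : hpartition Zi (terminal G).
Hypothesis PR : perfect_recall i (ext_family G i Zi).

Notation F := (ext_family G i Zi).

Lemma F_tree {B} {h : hist} : F B -> B h -> gHbar G h.
Proof.
case=> FB Bh; first by have [[]] := (proj1 (proj2 HinfoP)) B FB h Bh.
by have [] := (proj1 (proj2 HZ)) B FB h Bh.
Qed.

Lemma F_overlap {B1 B2} {h : hist} : F B1 -> F B2 -> B1 h -> B2 h -> B1 = B2.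
Proof.
have [_ [S1 [_ O1]]] := HinfoP; have [_ [S2 [_ O2]]] := HZ.
case=> F1 [] F2 H1 H2.
- apply: O1 => //; by exists h.
- have [[_ NT] _] := S1 _ F1 _ H1; by case: NT; apply: S2 H2.
- have [[_ NT] _] := S1 _ F2 _ H2; by case: NT; apply: S2 H1.
- apply: O2 => //; by exists h.
Qed.

Lemma F_ne {B} : F B -> exists h : hist, B h.
Proof. case=> FB; [exact: (proj1 HinfoP) | exact: (proj1 HZ)]. Qed.

Lemma F_cover {h : hist} : Hi G i h \/ terminal G h -> exists B, F B /\ B h.
Proof.
case=> H.
- have [B [FB Bh]] := (proj1 (proj2 (proj2 HinfoP))) h H; exists B; split=> //; by left.
- have [B [FB Bh]] := (proj1 (proj2 (proj2 HZ))) h H; exists B; split=> //; by right.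
Qed.

Lemma PR_acts {B} {h h' : hist} : F B -> B h -> B h' -> acts i h = acts i h'.
Proof. move=> FB Bh Bh'; exact: (proj1 (PR _ FB _ _ Bh Bh')). Qed.

Lemma PR_pre {B Bb} {h h' hb : hist} : F B -> B h -> B h' -> F Bb -> Bb hb -> Defs.prefix hb h ->
  exists hb', Bb hb' /\ Defs.prefix hb' h'.
Proof. move=> FB Bh Bh'; exact: (proj2 (PR _ FB _ _ Bh Bh')). Qed.

Lemma reach {Bu} {h : hist} {th} {a} : gInfo G i Bu -> Bu h -> Cons th h -> gA G h i a -> a (th i) ->
  exists B h' p, isucc F Bu B /\ B h' /\ Cons th h' /\ gHbar G h' /\ p i = Some a /\
    Defs.prefix (rcons h p) h'.
Proof.
move=> GBu Buh Ch Ga Ha.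
have FBu : F Bu by left.
have Hh : Hi G i h := (proj1 (proj2 HinfoP)) _ GBu _ Buh.
have [NT Hg] := Hh.
have [q [Tq [Cq Hqi]]] := truth_step (i := i) NT Ch.
have Eq := Hqi a Hg Ga Ha.
have [h' [P1 [T1 [C1 [S1 N1]]]]] := walk (i := i) _ _ (leqnn (L - size (rcons h q))) Tq Cq.
have [B [FB Bh']] := F_cover S1.
have Phq : Defs.prefix h (rcons h q) by exists [:: q]; rewrite cats1.
have Phh' : Defs.prefix h h' := pre_trans Phq P1.
have Nhh' : h <> h'.
  move=> E; subst h'; move: (pre_size P1); rewrite size_rcons; lia.
exists B, h', q; split; last by [].
split=> //; split; first by exists h, h'.
split.
  move=> E; subst B.
  have := acts_strict Hh T1 Phh' Nhh'; rewrite (PR_acts FBu Buh Bh'); lia.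
move=> [C [FC [CBu [CB [[hu [c [Hu [Cc Phc]]]] [c' [hb [Cc' [Bhb Pc'hb]]]]]]]]].
have [c'' [Cc'' Pc''h']] := PR_pre FB Bhb Bh' FC Cc' Pc'hb.
case: (classic (c'' = h')) => Ec''.
  subst c''; apply: CB; exact: F_overlap FC FB Cc'' Bh'.
have HC : Hi G i c''.
  case: FC Cc'' => [GC|ZC] Cc''.
  - exact: (proj1 (proj2 HinfoP)) _ GC _ Cc''.
  - have [_ Ht] := (proj1 (proj2 HZ)) _ ZC _ Cc''; by case: Ec''; symmetry; exact: (Ht _ T1 Pc''h').
have [Pqc|Pcq] := pre_total P1 Pc''h'.
  exact: N1 Pqc Pc''h' Ec'' HC.
have [Ec|Pch] := pre_rcons_r Pcq.
  subst c''; apply: (N1 _ (pre_refl _) Pc''h' Ec'' HC).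
case: (classic (c'' = h)) => Ech.
  subst c''; apply: CBu; exact: F_overlap FC FBu Cc'' Buh.
have Tc := F_tree FC Cc.
have S1' := acts_strict HC (F_tree FBu Buh) Pch Ech.
case: (classic (hu = c)) => Ehc.
  subst c; apply: CBu; exact: F_overlap FC FBu Cc Hu.
have Hhu : Hi G i hu := (proj1 (proj2 HinfoP)) _ GBu _ Hu.
have S2 := acts_strict Hhu Tc Phc Ehc.
move: S1' S2; rewrite (PR_acts FC Cc Cc'') (PR_acts FBu Hu Buh); lia.
Qed.


Lemma act_cap {Bu a B} {h : hist} {t} : gInfo G i Bu -> (forall h, Bu h -> gA G h i a) ->
  isucc_act i F Bu a B -> B h -> a t -> capActs i h t.
Proof.
move=> GBu HA [[FB [_ [_ NoC]]] [hu [hb0 [p [Hu [Bhb0 [Ep Pre]]]]]]] Bh Ht.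
have FBu : F Bu by left.
have Hhu : Hi G i hu := (proj1 (proj2 HinfoP)) _ GBu _ Hu.
have Thb0 := F_tree FB Bhb0.
have Phu : Defs.prefix hu (rcons hu p) by exists [:: p]; rewrite cats1.
have Hno : forall c, Defs.prefix (rcons hu p) c -> Defs.prefix c hb0 -> c <> hb0 -> ~ Hi G i c.
  move=> c P1 P2 Ne Hc.
  have [C [FC Cc]] := F_cover (or_introl Hc).
  have Tc := F_tree FC Cc.
  have Phc := pre_trans Phu P1.
  apply: NoC; exists C; split=> //; split.
    move=> E; subst C.
    have Nhc : hu <> c by move=> E; subst c; move: (pre_size P1); rewrite size_rcons; lia.
    have := acts_strict Hhu Tc Phc Nhc; rewrite (PR_acts FBu Hu Cc); lia.
  split.
    move=> E; subst C.
    have := acts_strict Hc Thb0 P2 Ne; rewrite (PR_acts FB Cc Bhb0); lia.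
  split; [by exists hu, c | by exists c, hb0].
have E1 := noi_acts Thb0 Pre Hno.
move=> x; rewrite (PR_acts FB Bh Bhb0) E1 acts_rcons Ep -cats1 List.in_app_iff.
case=> [Hx|[<-|//]] //.
have := proj2 (Hcap _ _ Hhu t) (ex_intro _ a (conj (HA _ Hu) Ht)); exact.
Qed.

Lemma isucc_disj {Bu B1 B2} {h1 h2 : hist} : isucc F Bu B1 -> isucc F Bu B2 -> B1 <> B2 ->
  B1 h1 -> B2 h2 -> Defs.prefix h1 h2 \/ Defs.prefix h2 h1 -> False.
Proof.
move=> [F1 [P1 [N1 C1]]] [F2 [P2 [N2 C2]]] Ne B1h B2h [P|P].
- apply: C2; exists B1; do 4 split=> //; by exists h1, h2.
- apply: C1; exists B2; split=> //; split=> //; split; first by move=> E; apply: Ne.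
  split=> //; by exists h2, h1.
Qed.

Lemma part1 {Bu} : gInfo G i Bu -> family_partition (isucc F Bu) ThetaB (ThetaB Bu).
Proof.
move=> GBu; have FBu : F Bu by left.
split; [|split].
- move=> B [FB _]; have [h Bh] := F_ne FB.
  have [th Hth] := exists_ThetaH (F_tree FB Bh); exists th, h; by split.
- move=> B1 B2 I1 I2 Ne th [h1 [B1h T1]] [h2 [B2h T2]].
  have Th1 := F_tree (proj1 I1) B1h; have Th2 := F_tree (proj1 I2) B2h.
  apply: (isucc_disj I1 I2 Ne B1h B2h).
  exact: cons_comparable Th1 Th2 (proj1 (ThetaH_Cons Th1) T1) (proj1 (ThetaH_Cons Th2) T2).
- move=> th; split.
  + move=> [h [Buh Th]].
    have Hh : Hi G i h := (proj1 (proj2 HinfoP)) _ GBu _ Buh.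
    have Tr := F_tree FBu Buh.
    have Ch := proj1 (ThetaH_Cons Tr) Th.
    have [a [Ga Ha]] := proj1 (Hcap _ _ Hh (th i)) (Ch i).
    have [B [h' [p [IB [Bh' [Ch' [Th' _]]]]]]] := reach GBu Buh Ch Ga Ha.
    exists B; split=> //; exists h'; split=> //; exact/(ThetaH_Cons Th').
  + move=> [B [IB [hb [Bhb Th]]]].
    have [FB [[hu [hb0 [Hu [Bhb0 P]]]] _]] := IB.
    have [hu' [Hu' P']] := PR_pre FB Bhb0 Bhb FBu Hu P.
    exists hu'; split=> // j; exact: ThetaAt_mono (F_tree FB Bhb) P' (Th j).
Qed.

Lemma part2 {Bu a} : gInfo G i Bu -> (forall h, Bu h -> gA G h i a) ->
  family_partition (isucc_act i F Bu a) (ThetaB_minus i) (ThetaB_minus i Bu).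
Proof.
move=> GBu HA; have FBu : F Bu by left.
have [hu Hu] := F_ne FBu.
have [t Ht] := Hne _ _ ((proj1 (proj2 HinfoP)) _ GBu _ Hu) _ (HA _ Hu).
split; [|split].
- move=> B [[FB _] _]; have [h Bh] := F_ne FB.
  have [th Hth] := exists_ThetaH (F_tree FB Bh); exists (fun j _ => th j), h; split; first exact: Bh.
  move=> j hj; exact: (Hth j).
- move=> B1 B2 I1 I2 Ne th' [h1 [B1h T1]] [h2 [B2h T2]].
  have [th [Ei Ej]] := ext_profile _ th' t.
  have Th1 := F_tree (proj1 (proj1 I1)) B1h; have Th2 := F_tree (proj1 (proj1 I2)) B2h.
  have A1 : ThetaAt i h1 t by apply/(ThetaAt_cap Th1); exact: act_cap GBu HA I1 B1h Ht.
  have A2 : ThetaAt i h2 t by apply/(ThetaAt_cap Th2); exact: act_cap GBu HA I2 B2h Ht.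
  have U1 := glue _ T1 A1 Ei Ej; have U2 := glue _ T2 A2 Ei Ej.
  apply: (isucc_disj (proj1 I1) (proj1 I2) Ne B1h B2h).
  exact: cons_comparable Th1 Th2 (proj1 (ThetaH_Cons Th1) U1) (proj1 (ThetaH_Cons Th2) U2).
- move=> th'; split.
  + move=> [h [Buh Th']].
    have Hh : Hi G i h := (proj1 (proj2 HinfoP)) _ GBu _ Buh.
    have Tr := F_tree FBu Buh.
    have Ga := HA _ Buh.
    have [t' Ht'] := Hne _ _ Hh _ Ga.
    have [th [Ei Ej]] := ext_profile _ th' t'.
    have A : ThetaAt i h t'.
      apply/(ThetaAt_cap Tr); exact: (proj2 (Hcap _ _ Hh t') (ex_intro _ a (conj Ga Ht'))).
    have U := glue _ Th' A Ei Ej.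
    have Ch := proj1 (ThetaH_Cons Tr) U.
    have Ha : a (th i) by rewrite Ei.
    have [B [h' [p [IB [Bh' [Ch' [Th'' [Ep Pp]]]]]]]] := reach GBu Buh Ch Ga Ha.
    exists B; split.
      split=> //; exists h, h', p; by do 3 split=> //.
    exists h'; split=> // j hj; rewrite -(Ej j hj); exact: (proj2 (ThetaH_Cons Th'') Ch' j).
  + move=> [B [[IB _] [hb [Bhb Th]]]].
    have [FB [[hu0 [hb0 [Hu0 [Bhb0 P]]]] _]] := IB.
    have [hu' [Hu' P']] := PR_pre FB Bhb0 Bhb FBu Hu0 P.
    exists hu'; split=> // j hj; exact: ThetaAt_mono (F_tree FB Bhb) P' (Th j hj).
Qed.

End Game.

Theorem proposition2
  (N : finType) (Theta : N -> Type) (X : Type)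
  (f : tprofile Theta -> X) (G : game_form Theta X) :
  (forall j, inhabited (Theta j)) ->
  is_gradual_mechanism G f ->
  forall (i : N) (Zi : hfamily Theta),
    hpartition Zi (terminal G) ->
    perfect_recall i (ext_family G i Zi) ->
    (forall Bu, gInfo G i Bu ->
       family_partition (isucc (ext_family G i Zi) Bu) ThetaB
         (ThetaB Bu)) /\
    (forall Bu, gInfo G i Bu -> forall a, (forall h, Bu h -> gA G h i a) ->
       family_partition (isucc_act i (ext_family G i Zi) Bu a)
         (ThetaB_minus i) (ThetaB_minus i Bu)).
Proof.
move=> Hinh [[_ [Hpre [_ [[L Hfin] [Hsucc [Hpart [_ _]]]]]]] [Hne [H2 _]]] i Zi HZ PR.
have Hdisj := fun i h Hh => proj1 (H2 i h Hh).
have Hcap := fun i h Hh => proj2 (H2 i h Hh).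
split.
- move=> Bu GBu; exact: (@part1 _ _ _ _ Hpre Hsucc Hne Hdisj Hcap _ Hfin Hinh _ _ (Hpart i) HZ PR _ GBu).
- move=> Bu GBu a HA; exact: (@part2 _ _ _ _ Hpre Hsucc Hne Hdisj Hcap _ Hfin Hinh _ _ (Hpart i) HZ PR _ _ GBu HA).
Qed.
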